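(* Let $(M,d,\mu,\mathcal{E},\mathcal{F})$ be a metric measure Dirichlet space (as in the context) with diffusion $(X_t,P^x)$, and let $\epsilon>0$. For every $x\in M$, $P^x$-almost surely the map $t\mapsto V_\epsilon(t)$ is continuous.
   Context: Standing framework: $(M,d)$ non-compact, connected, complete, separable metric space with relatively compact open balls $B(x,r)=\{y:d(x,y)<r\}$; $\mu$ a Borel measure with $0<\mu(U)\le\mu(\overline U)<\infty$ for relatively compact open $U$; for every $x\in M$, $r\ge0$ the sphere $\{y:d(x,y)=r\}$ is nonempty and has $\mu$-measure zero; $(\mathcal{E},\mathcal{F})$ a strongly local, regular, symmetric, conservative Dirichlet form on $L^2(M,\mu)$ whose associated Hunt process $(X_t,P^x)$ (a diffusion, i.e. with continuous paths) has a jointly continuous heat kernel. $V_\epsilon(t)=\mu(\bigcup_{s\in[0,t]}B(X_s,\epsilon))$. *)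

(* Defs.v *)
From HB Require Import structures.
From mathcomp Require Import all_boot all_order all_algebra.
From mathcomp Require Import all_classical all_reals all_analysis.
Set Implicit Arguments. Unset Strict Implicit. Unset Printing Implicit Defensive.
Import Order.TTheory GRing.Theory Num.Theory.
Local Open Scope classical_set_scope.
Local Open Scope ring_scope.

Definition mball {R : realType} {M : metricType R} (x : M) (r : R) : set M :=
  [set y | mdist x y < r].

Definition msphere {R : realType} {M : metricType R} (x : M) (r : R) : set M :=
  [set y | mdist x y = r].

(* MathComp-Analysis has no pointed metric structure, and the generated
   sigma-algebra instance needs a pointed carrier; we therefore attach an
   (irrelevant) base point m0 to a copy of M.  The sigma-algebra itself does
   not depend on m0. *)
Definition pointed_copy {R : realType} {M : metricType R} (m0 : M) : Type := M.
HB.instance Definition _ {R : realType} {M : metricType R} (m0 : M) :=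
  Choice.on (pointed_copy m0).
HB.instance Definition _ {R : realType} {M : metricType R} (m0 : M) :=
  isPointed.Build (pointed_copy m0) m0.
Definition borel {R : realType} {M : metricType R} (m0 : M) :=
  @g_sigma_algebraType (pointed_copy m0) (@open M).

Definition complete_metric {R : realType} (M : metricType R) : Prop :=
  forall F : set_system M, ProperFilter F -> cauchy F -> exists l : M, F --> l.

Definition separable_space {R : realType} (M : metricType R) : Prop :=
  exists D : set M, countable D /\ closure D = setT.

Definition relatively_compact {R : realType} {M : metricType R} (U : set M) : Prop :=
  compact (closure U).

Definition Veps {R : realType} {M : metricType R} {Omega : Type} {m0 : M}
  (mu : {measure set (borel m0) -> \bar R}) (X : R -> Omega -> M)
  (eps : R) (w : Omega) (t : R) : \bar R :=
  mu (\bigcup_(s in `[0, t]) mball (X s w) eps).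

(* Main.v *)
Require Import Defs.
From HB Require Import structures.
From mathcomp Require Import all_boot all_order all_algebra.
From mathcomp Require Import all_classical all_reals all_analysis.
From mathcomp Require Import lra.
Import numFieldTopology.Exports.
Import Order.TTheory GRing.Theory Num.Theory.
Set Implicit Arguments. Unset Strict Implicit. Unset Printing Implicit Defensive.
Local Open Scope classical_set_scope.
Local Open Scope ring_scope.
Section S.
Variables (R : realType) (M : metricType R).

Lemma mball_open (x : M) r : open (mball x r).
Proof.
rewrite openE => y; rewrite /mball /= => xy.
rewrite /interior; apply/nbhs_ballP; exists (r - mdist x y) => /=.
  by rewrite subr_gt0.
move=> z; rewrite ballEmdist /= => yz.
have := metric_triangle x y z; move=> h.
lra.
Qed.

Lemma mgt_open (x : M) r : open [set y | r < mdist x y].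
Proof.
rewrite openE => y /= xy.
rewrite /interior; apply/nbhs_ballP; exists (mdist x y - r) => /=.
  by rewrite subr_gt0.
move=> z; rewrite ballEmdist /= => yz.
have := metric_triangle x z y; rewrite (metric_sym z y) => h.
lra.
Qed.

Lemma msphere_eq (x : M) r : msphere x r = ~` (mball x r `|` [set y | r < mdist x y]).
Proof.
apply/seteqP; split => y /=; rewrite /msphere /mball /=.
  by move=> ->; rewrite ltxx; case.
move/not_orP => [] /negP; rewrite -leNgt => h1 /negP; rewrite -leNgt => h2.
by apply/eqP; rewrite eq_le h1 h2.
Qed.

Lemma cont_ext (g : R -> M) : {within `[0, +oo[, continuous g} ->
  forall t, 0 <= t -> forall e, 0 < e -> exists2 d, 0 < d &
  forall s, 0 <= s -> `|s - t| < d -> mdist (g t) (g s) < e.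
Proof.
move=> hg t t0 e e0.
move/subspace_continuousP: hg => /(_ t).
have tA : `[0, +oo[%classic t by rewrite /= in_itv /= andbT.
move=> /(_ tA).
move/cvg_ballP => /(_ e e0).
rewrite /within /= => /nbhs_ballP [d d0 hd]; exists d => // s s0 st.
have := hd s; rewrite ballEmdist /=; apply.
  by rewrite -ball_normE /= distrC.
by rewrite in_itv /= s0.
Qed.

Lemma near_within (t : R) (P : R -> Prop) :
  (exists2 d, 0 < d & forall s, 0 <= s -> `|s - t| < d -> P s) ->
  \forall s \near within (`[0, +oo[%classic : set R) (nbhs t), P s.
Proof.
move=> [d d0 hd]; rewrite /within /=; apply/nbhs_ballP; exists d => // s /= ts.
rewrite in_itv /= andbT => s0; apply: hd => //; by rewrite -ball_normE /= distrC in ts.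
Qed.

Lemma conclude (f : R -> \bar R) :
 (forall s, 0 <= f s)%E ->
 (forall t, 0 <= t -> forall a : R, (a%:E < f t)%E -> exists2 d, 0 < d &
    forall s, 0 <= s -> `|s - t| < d -> (a%:E < f s)%E) ->
 (forall t, 0 <= t -> forall b : R, (f t < b%:E)%E -> exists2 d, 0 < d &
    forall s, 0 <= s -> `|s - t| < d -> (f s < b%:E)%E) ->
 {within `[0, +oo[, continuous f}.
Proof.
move=> f0 hL hU; apply/subspace_continuousP => t /=; rewrite in_itv /= andbT => t0.
rewrite /from_subspace /=. move: (f0 t) (hL t t0) (hU t t0); case: (f t) => [r| |] // _ L U.
- apply/fine_cvgP; split.
    apply: near_within; have [|d d0 hd] := U (r + 1)%R; first by rewrite lte_fin ltrDl.
    exists d => // s s0 st; rewrite ge0_fin_numE //; exact: lt_trans (hd s s0 st) (ltry _).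
  apply/cvgrPdist_lt => e e0.
  have [|d1 d10 hd1] := L (r - e)%R; first by rewrite lte_fin gtrBl.
  have [|d2 d20 hd2] := U (r + e)%R; first by rewrite lte_fin ltrDl.
  apply: near_within; exists (Num.min d1 d2); first by rewrite lt_min d10 d20.
  move=> s s0; rewrite lt_min => /andP [s1 s2].
  move: (hd1 s s0 s1) (hd2 s s0 s2); case E: (f s) => [x| |] //=; rewrite !lte_fin => h1 h2.
  rewrite /= E /= ltr_norml; apply/andP; split; lra.
- apply/(@cvgeyPgt R _ (within (`[0, +oo[%classic : set R) (nbhs t))) => A; apply: near_within; have [d d0 hd] := L A (ltry _).
  by exists d.
Qed.

Lemma small_n (t e : R) : 0 < t -> 0 < e -> exists n : nat, t / n.+1%:R < e.
Proof.
move=> t0 e0; have [k hk] := ltr_add_invr (divr_gt0 e0 t0).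
rewrite add0r in hk; exists k.
have k0 : 0 < (k.+1%:R : R) by rewrite ltr0n.
rewrite ltr_pdivrMr // -ltr_pdivrMl // mulrC.
by rewrite -ltf_pV2 ?posrE ?divr_gt0 // invf_div.
Qed.
End S.

Section Main.
Variables (R : realType) (M : metricType R) (m0 : M).
Variable (mu : {measure set (borel m0) -> \bar R}).
Variables (g : R -> M) (eps : R).
Hypothesis eps0 : 0 < eps.
Hypothesis hg : {within `[0, +oo[, continuous g}.
Hypothesis mu_fin : forall U : set M, open U -> relatively_compact U ->
     (mu (closure U) < +oo)%E.
Hypothesis balls_rc : forall (x : M) (r : R), relatively_compact (mball x r).
Hypothesis sphere_null : forall (x : M) (r : R), 0 <= r -> mu (msphere x r) = 0%E.

Lemma open_meas (A : set M) : open A -> measurable (A : set (borel m0)).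
Proof. move=> oA. exact: sub_sigma_algebra. Qed.

Let U (t : R) : set M := \bigcup_(s in `[0, t]) mball (g s) eps.

Let U_open t : open (U t).
Proof. apply: bigcup_open => s _; exact: mball_open. Qed.

Let U_meas t : measurable (U t : set (borel m0)).
Proof. apply: open_meas. exact: U_open. Qed.

Let U_mono s t : s <= t -> U s `<=` U t.
Proof.
move=> st y [u /= hu hy]; exists u => //=; move: hu; rewrite /= !in_itv /= => /andP [-> ut].
exact: le_trans ut st.
Qed.

Let f_mono s t : s <= t -> (mu (U s) <= mu (U t))%E.
Proof. by move=> st; apply: le_measure; rewrite ?inE; [exact: U_meas|exact: U_meas|exact: U_mono]. Qed.

Let closure_meas (A : set M) : measurable (closure A : set (borel m0)).
Proof.
rewrite -[closure A]setCK; apply: measurableC; apply: open_meas.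
apply: closed_openC; exact: closed_closure.
Qed.

Lemma le_div_n (t : R) n : 0 <= t -> t / n.+1%:R <= t.
Proof. move=> t0; rewrite ler_pdivrMr ?ltr0n // ler_peMr // ler1n //. Qed.

Let hL t : 0 <= t -> forall a : R, (a%:E < mu (U t))%E -> exists2 d, 0 < d &
  forall s, 0 <= s -> `|s - t| < d -> (a%:E < mu (U s))%E.
Proof.
move=> t0 a ha.
have [t00|tpos] : t = 0 \/ 0 < t by move: t0; rewrite le_eqVlt => /orP [/eqP<-|]; [left|right].
  subst t; exists 1 => // s s0 _; exact: lt_le_trans ha (f_mono s0).
pose F n := U (t - t / n.+1%:R).
have Fnd : nondecreasing_seq F.
  move=> m n mn; apply/subsetPset/U_mono.
  rewrite lerD2l lerN2 ler_pM2l // lef_pV2 ?posrE ?ltr0n // ler_nat //.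
have FU : \bigcup_n F n = U t.
  apply/seteqP; split.
    move=> y [n _ Fy]; apply: (U_mono _ Fy).
    by rewrite gerBl divr_ge0 // ltW.
  move=> y [s /= hs hy]; move: hs; rewrite in_itv /= => /andP [s0 st].
  move: st; rewrite le_eqVlt => /orP [/eqP st|st].
    subst s.
    have gpos : 0 < eps - mdist (g t) y by rewrite subr_gt0.
    have [del del0 hdel] := cont_ext hg t0 gpos.
    have [n hn] := small_n tpos del0.
    exists n => //; exists (t - t / n.+1%:R).
      rewrite /= in_itv /= subr_ge0 le_div_n //=.
    have qt := le_div_n n t0.
    have := hdel (t - t / n.+1%:R).
    have -> : `|t - t / n.+1%:R - t| = t / n.+1%:R.
      by rewrite addrAC subrr add0r normrN ger0_norm // divr_ge0 // ltW.
    move=> /(_ _ hn); rewrite subr_ge0 => /(_ qt) h.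
    rewrite /mball /=.
    have := metric_triangle (g (t - t / n.+1%:R)) (g t) y.
    rewrite [mdist (g (t - _)) (g t)]metric_sym; lra.
  have st' : 0 < t - s by rewrite subr_gt0.
  have [n hn] := small_n tpos st'.
  exists n => //; exists s => //=.
  rewrite in_itv /= s0 /=; set q := t / n.+1%:R in hn *; lra.
have Fm : forall n, measurable (F n : set (borel m0)) by move=> n; exact: U_meas.
have hc := nondecreasing_cvg_mu (mu:=mu) Fm (bigcupT_measurable _ Fm) Fnd.
rewrite FU in hc.
have := hc _ (open_ereal_gt' ha); case=> N _ hN.
have hN' := hN N (leqnn N); rewrite /= in hN'.
exists (t / N.+1%:R); first by rewrite divr_gt0.
move=> s s0 st; apply: lt_le_trans hN' (f_mono _).
move: st; rewrite ltr_norml => /andP [h1 h2]; set q := t / N.+1%:R in h1 h2 *; lra.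
Qed.

Let sph_meas x r : measurable (msphere x r : set (borel m0)).
Proof.
rewrite msphere_eq; apply: measurableC; apply: measurableU; apply: open_meas.
  exact: mball_open.
exact: mgt_open.
Qed.

Let hU t : 0 <= t -> forall b : R, (mu (U t) < b%:E)%E -> exists2 d, 0 < d &
  forall s, 0 <= s -> `|s - t| < d -> (mu (U s) < b%:E)%E.
Proof.
move=> t0 b hb.
have [del del0 hdel] := cont_ext hg t0 eps0.
pose h n := (del / 2) / n.+1%:R.
have del2 : 0 < del / 2 by rewrite divr_gt0.
have hpos n : 0 < h n by rewrite divr_gt0.
have hle n : h n < del.
  apply: (le_lt_trans (le_div_n n (ltW del2))); rewrite ltr_pdivrMr // ltr_pMr //.
  by rewrite ltr1n.
pose E n := (\bigcup_(s in `[t, t + h n]) mball (g s) eps) `\` mball (g t) eps.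
have Em n : measurable (E n : set (borel m0)).
  apply: measurableD; apply: open_meas; last exact: mball_open.
  apply: bigcup_open => s _; exact: mball_open.
have Eni : nonincreasing_seq E.
  move=> m n mn; apply/subsetPset => y [[s hs hy] hny]; split => //; exists s => //.
  move: hs; rewrite /= !in_itv /= => /andP [-> sn] /=.
  apply: (le_trans sn); rewrite lerD2l ler_pM2l // lef_pV2 ?posrE ?ltr0n // ler_nat //.
have Eball n : E n `<=` mball (g t) (eps + eps).
  move=> y [[s hs hy] _]; move: hs; rewrite /= in_itv /= => /andP [ts sn].
  have s0 : 0 <= s by exact: le_trans t0 ts.
  have : `|s - t| < del.
    rewrite ger0_norm ?subr_ge0 //; apply: le_lt_trans (hle n).
    move: sn; set q := h n; move=> sn; lra.
  move/(hdel s s0) => hts; rewrite /mball /=.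
  have := metric_triangle (g t) (g s) y; move: hy; rewrite /mball /=; lra.
have E0fin : (mu (E 0%N) < +oo)%E.
  have hfin := mu_fin (@mball_open _ _ (g t) (eps + eps)) (@balls_rc (g t) (eps + eps)). apply: le_lt_trans hfin.
  apply: le_measure; rewrite ?inE; [exact: Em|exact: closure_meas|].
  apply: (subset_trans (Eball 0%N)); exact: subset_closure.
have Ecap : \bigcap_n E n `<=` msphere (g t) eps.
  move=> y hy; rewrite /msphere /=.
  have [_ ny] := hy 0%N I.
  apply/eqP; rewrite eq_le; apply/andP; split; last by rewrite leNgt; apply/negP.
  rewrite leNgt; apply/negP => hgt.
  have gpos : 0 < mdist (g t) y - eps by rewrite subr_gt0.
  have [del' del'0 hdel'] := cont_ext hg t0 gpos.
  have [n hn] := small_n del2 del'0.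
  have [[s hs hy'] _] := hy n I.
  move: hs; rewrite /= in_itv /= => /andP [ts sn].
  have s0 : 0 <= s by exact: le_trans t0 ts.
  have : `|s - t| < del'.
    rewrite ger0_norm ?subr_ge0 //; apply: le_lt_trans hn.
    move: sn; rewrite /h; set q := del / 2 / n.+1%:R; lra.
  move/(hdel' s s0) => hts; move: hy'; rewrite /mball /=.
  have := metric_triangle (g t) (g s) y; lra.
have Ecap0 : mu (\bigcap_n E n) = 0%E.
  apply/eqP; rewrite eq_le measure_ge0 andbT -(sphere_null (g t) (ltW eps0)).
  apply: le_measure; rewrite ?inE; [exact: bigcapT_measurable|exact: sph_meas|exact: Ecap].
have hc := nonincreasing_cvg_mu E0fin Em (bigcapT_measurable Em) Eni.
rewrite Ecap0 in hc.
have ftfin : mu (U t) \is a fin_num.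
  by rewrite ge0_fin_numE ?measure_ge0 //; exact: lt_trans hb (ltry _).
set r := fine (mu (U t)).
have ft : mu (U t) = r%:E by rewrite /r fineK.
have rb : r < b by rewrite -lte_fin -ft.
have := hc _ (open_ereal_lt' (x:=0%E) (y:=(b - r)%:E) _).
rewrite lte_fin subr_gt0 => /(_ rb) [N _ hN].
have hN' := hN N (leqnn N); rewrite /= in hN'.
have Usub : U (t + h N) `<=` U t `|` E N.
  move=> y [s hs hy]; move: hs; rewrite /= in_itv /= => /andP [s0 sN].
  have [st|ts] := leP s t.
    by left; exists s => //=; rewrite in_itv /= s0 st.
  have [gy|ngy] := pselect (mball (g t) eps y).
    by left; exists t => //=; rewrite in_itv /= t0 lexx.
  right; split => //; exists s => //=; rewrite in_itv /= sN andbT ltW //.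
exists (h N) => // s s0 st.
have sle : s <= t + h N.
  move: st; rewrite ltr_norml => /andP [h1 h2]; move: h1 h2; set q := h N; lra.
apply: (le_lt_trans (f_mono sle)).
apply: (le_lt_trans (le_measure mu _ _ Usub)); rewrite ?inE.
- exact: U_meas.
- apply: measurableU; [exact: U_meas|exact: Em].
apply: (le_lt_trans (measureU2 _ (U_meas t) (Em N))).
have key : forall x y : \bar R, x = r%:E -> (y < (b - r)%:E)%E -> (x + y < b%:E)%E.
  move=> x y -> hy.
  have -> : b%:E = (r%:E + (b - r)%:E)%E by rewrite -EFinD addrC subrK.
  by rewrite lteD2lE.
exact: key ft hN'.
Qed.
Lemma path_cont : {within `[0, +oo[, continuous (fun t => mu (U t))}.
Proof.
apply: conclude; [move=> s; exact: measure_ge0 | exact: hL | exact: hU].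
Qed.

End Main.

Unset Implicit Arguments.

Theorem lemma2p3 (R : realType) (M : metricType R) (m0 : M)
  (mu : {measure set (borel m0) -> \bar R})
  (dO : measure_display) (Omega : measurableType dO)
  (P : M -> probability Omega R) (X : R -> Omega -> M)
  (* standing assumptions on the metric space *)
  (Mnoncompact : ~ compact [set: M])
  (Mconnected : connected [set: M])
  (Mcomplete : complete_metric M)
  (Mseparable : separable_space M)
  (balls_rc : forall (x : M) (r : R), relatively_compact (mball x r))
  (* standing assumptions on the measure *)
  (mu_pos : forall U : set M, open U -> relatively_compact U -> U !=set0 ->
     (0 < mu U)%E)
  (mu_fin : forall U : set M, open U -> relatively_compact U ->
     (mu (closure U) < +oo)%E)
  (sphere_ne : forall (x : M) (r : R), 0 <= r -> msphere x r !=set0)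
  (sphere_null : forall (x : M) (r : R), 0 <= r -> mu (msphere x r) = 0%E)
  (* the process: measurable, started at x under P x, continuous paths *)
  (X_meas : forall t : R, 0 <= t ->
     measurable_fun [set: Omega] (X t : Omega -> borel m0))
  (X_start : forall x : M, P x [set w | X 0 w = x] = 1%E)
  (X_cont : forall y : M,
     {ae P y, forall w : Omega, {within `[0, +oo[, continuous (fun t => X t w)}})
  (eps : R) (eps_gt0 : 0 < eps) (x : M) :
  {ae P x, forall w : Omega, {within `[0, +oo[, continuous (Veps mu X eps w)}}.

Proof.
have := X_cont x; apply: filterS => w hw.
exact: (@path_cont _ _ _ mu _ _ eps_gt0 hw mu_fin balls_rc sphere_null).
Qed.
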